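(* Let $V$ be a real Hilbert space, $\mathcal D$ a dictionary, $V_n\subset V$ a subspace of dimension $n$ with orthonormal basis $(\phi_1,\dots,\phi_n)$, and $\kappa\in(0,1)$. Let $(W_m)_{m\ge0}$ be generated by the collective OMP algorithm with parameter $\kappa$. If $J(V_n)<\infty$, then $$r_m\le\frac{J(V_n)^2}{\kappa^2}(m+1)^{-1}\qquad\text{for all } m\ge0.$$
   Context: A dictionary is a set $\mathcal D\subset V$ of elements with $\|\omega\|=1$ for all $\omega\in\mathcal D$ whose finite linear combinations are dense in $V$. Collective OMP: $W_0=\{0\}$; for $k\ge1$, choose $\omega_k\in\mathcal D$ with $$\sum_{i=1}^n|\langle\phi_i-P_{W_{k-1}}\phi_i,\omega_k\rangle|^2\ge\kappa^2\sup_{\omega\in\mathcal D}\sum_{i=1}^n|\langle\phi_i-P_{W_{k-1}}\phi_i,\omega\rangle|^2,$$ and set $W_k=\operatorname{span}\{\omega_1,\dots,\omega_k\}$ ($P_X$ is the orthogonal projection onto $X$). The residual is $r_m=\sum_{i=1}^n\|\phi_i-P_{W_m}\phi_i\|^2$. For $\Psi=(\psi_1,\dots,\psi_n)\in V^n$, $\|\Psi\|_{\ell^1(\mathcal D)}=\inf\{\sum_{\omega\in\mathcal D}\|c_\omega\|_2:\psi_i=\sum_{\omega\in\mathcal D}c_{\omega,i}\,\omega,\ i=1,\dots,n\}$ with $c_\omega\in\mathbb R^n$ (countably many nonzero; infimum of the empty set is $+\infty$), and $J(V_n)=\|(\phi_1,\dots,\phi_n)\|_{\ell^1(\mathcal D)}$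 for an orthonormal basis of $V_n$ (independent of the choice of basis). *)

(* Defs.v *)
From HB Require Import structures.
From mathcomp Require Import all_boot all_order all_algebra.
From mathcomp Require Import all_classical all_reals all_analysis.
Set Implicit Arguments. Unset Strict Implicit. Unset Printing Implicit Defensive.
Import Order.TTheory GRing.Theory Num.Theory numFieldNormedType.Exports.
Local Open Scope classical_set_scope.
Local Open Scope ring_scope.

Definition is_inner_product (R : realType) (V : completeNormedModType R)
  (ip : V -> V -> R) : Prop :=
  [/\ (forall x y, ip x y = ip y x),
      (forall x y z, ip (x + y) z = ip x z + ip y z),
      (forall (a : R) x y, ip (a *: x) y = a * ip x y) &
      (forall x, ip x x = `|x| ^+ 2)].

Definition lin_span (R : realType) (V : completeNormedModType R) (D : set V) : set V :=
  [set v | exists (k : nat) (w : 'I_k -> V) (c : 'I_k -> R),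
      (forall j, D (w j)) /\ v = \sum_(j < k) c j *: w j].

Definition is_dictionary (R : realType) (V : completeNormedModType R) (D : set V) : Prop :=
  (forall w, D w -> `|w| = 1) /\ closure (lin_span D) = setT.

(* W_k = span {omega 0, ..., omega (k-1)}  (omega 0 plays the role of omega_1) *)
Definition Wspan (R : realType) (V : completeNormedModType R) (omega : nat -> V) (k : nat)
  : set V :=
  [set v | exists c : 'I_k -> R, v = \sum_(j < k) c j *: omega j].

Definition is_proj (R : realType) (V : completeNormedModType R) (ip : V -> V -> R)
  (W : set V) (x p : V) : Prop :=
  W p /\ forall w, W w -> ip (x - p) w = 0.

Definition proj (R : realType) (V : completeNormedModType R) (ip : V -> V -> R)
  (W : set V) (x : V) : V := xget 0 [set p | is_proj ip W x p].

Definition greedy_crit (R : realType) (V : completeNormedModType R) (ip : V -> V -> R)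
  (n : nat) (phi : 'I_n -> V) (W : set V) (w : V) : R :=
  \sum_(i < n) `|ip (phi i - proj ip W (phi i)) w| ^+ 2.

(* collective OMP with parameter kappa: omega k is the (k+1)-th selected element *)
Definition collective_OMP (R : realType) (V : completeNormedModType R) (ip : V -> V -> R)
  (D : set V) (n : nat) (phi : 'I_n -> V) (kappa : R) (omega : nat -> V) : Prop :=
  forall k : nat, D (omega k) /\
    greedy_crit ip phi (Wspan omega k) (omega k) >=
    kappa ^+ 2 * sup [set greedy_crit ip phi (Wspan omega k) w | w in D].

Definition residual (R : realType) (V : completeNormedModType R) (ip : V -> V -> R)
  (n : nat) (phi : 'I_n -> V) (omega : nat -> V) (m : nat) : R :=
  \sum_(i < n) `|phi i - proj ip (Wspan omega m) (phi i)| ^+ 2.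

Definition norm2 (R : realType) (n : nat) (c : 'I_n -> R) : R :=
  Num.sqrt (\sum_(i < n) c i ^+ 2).

(* ell^1(D) norm of (psi_1,...,psi_n): inf of sum ||c_w||_2 over representations
   psi_i = sum_w c_{w,i} w with countably many nonzero terms, enumerated by a
   sequence (w_k) of dictionary elements (series converging in V). *)
Definition l1D_norm (R : realType) (V : completeNormedModType R) (D : set V)
  (n : nat) (psi : 'I_n -> V) : \bar R :=
  ereal_inf [set (\sum_(0 <= k <oo) (norm2 (c k))%:E)%E
            | c in [set c : nat -> 'I_n -> R | exists w : nat -> V,
                 (forall k, D (w k)) /\
                 forall i, (fun N => \sum_(0 <= k < N) c k i *: w k) @ \oo --> psi i]].

(* Main.v *)
Require Import Defs.
From HB Require Import structures.
From mathcomp Require Import all_boot all_order all_algebra.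
From mathcomp Require Import all_classical all_reals all_analysis.
From mathcomp Require Import ring lra.
Import Order.TTheory GRing.Theory Num.Theory numFieldNormedType.Exports.
Local Open Scope classical_set_scope.
Local Open Scope ring_scope.

Lemma ipC {R : realType} {V : completeNormedModType R} {ip : V -> V -> R} :
  is_inner_product ip -> forall x y, ip x y = ip y x.
Proof. by case. Qed.
Lemma ipDl {R : realType} {V : completeNormedModType R} {ip : V -> V -> R} :
  is_inner_product ip -> forall x y z, ip (x + y) z = ip x z + ip y z.
Proof. by case. Qed.
Lemma ipZl {R : realType} {V : completeNormedModType R} {ip : V -> V -> R} :
  is_inner_product ip -> forall (a : R) x y, ip (a *: x) y = a * ip x y.
Proof. by case. Qed.
Lemma ipxx {R : realType} {V : completeNormedModType R} {ip : V -> V -> R} :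
  is_inner_product ip -> forall x, ip x x = `|x| ^+ 2.
Proof. by case. Qed.
Lemma ip0l {R : realType} {V : completeNormedModType R} {ip : V -> V -> R} :
  is_inner_product ip -> forall y, ip 0 y = 0.
Proof. by move=> h y; rewrite -(scale0r (0:V)) (ipZl h) mul0r. Qed.
Lemma ipNl {R : realType} {V : completeNormedModType R} {ip : V -> V -> R} :
  is_inner_product ip -> forall x y, ip (- x) y = - ip x y.
Proof. by move=> h x y; rewrite -scaleN1r (ipZl h) mulN1r. Qed.
Lemma ipBl {R : realType} {V : completeNormedModType R} {ip : V -> V -> R} :
  is_inner_product ip -> forall x y z, ip (x - y) z = ip x z - ip y z.
Proof. by move=> h x y z; rewrite (ipDl h) (ipNl h). Qed.
Lemma ipDr {R : realType} {V : completeNormedModType R} {ip : V -> V -> R} :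
  is_inner_product ip -> forall x y z, ip x (y + z) = ip x y + ip x z.
Proof. by move=> h x y z; rewrite !(ipC h x) (ipDl h). Qed.
Lemma ipZr {R : realType} {V : completeNormedModType R} {ip : V -> V -> R} :
  is_inner_product ip -> forall (a : R) x y, ip x (a *: y) = a * ip x y.
Proof. by move=> h a x y; rewrite !(ipC h x) (ipZl h). Qed.
Lemma ipBr {R : realType} {V : completeNormedModType R} {ip : V -> V -> R} :
  is_inner_product ip -> forall x y z, ip x (y - z) = ip x y - ip x z.
Proof. by move=> h x y z; rewrite !(ipC h x) (ipBl h). Qed.
Lemma ip0r {R : realType} {V : completeNormedModType R} {ip : V -> V -> R} :
  is_inner_product ip -> forall y, ip y 0 = 0.
Proof. by move=> h y; rewrite (ipC h) (ip0l h). Qed.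

Lemma ip_sumr {R : realType} {V : completeNormedModType R} {ip : V -> V -> R} :
  is_inner_product ip -> forall x N (c : 'I_N -> R) (w : 'I_N -> V),
  ip x (\sum_(j < N) c j *: w j) = \sum_(j < N) c j * ip x (w j).
Proof.
move=> h x N c w; elim/big_rec2: _ => [|j a y _ <-]; first exact: ip0r.
by rewrite (ipDr h) (ipZr h).
Qed.

Lemma ip_suml {R : realType} {V : completeNormedModType R} {ip : V -> V -> R} :
  is_inner_product ip -> forall x N (c : 'I_N -> R) (w : 'I_N -> V),
  ip (\sum_(j < N) c j *: w j) x = \sum_(j < N) c j * ip (w j) x.
Proof.
move=> h x N c w; rewrite (ipC h) (ip_sumr h); apply: eq_bigr => j _.
by rewrite (ipC h).
Qed.

Lemma ip_sqr {R : realType} {V : completeNormedModType R} {ip : V -> V -> R} :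
  is_inner_product ip -> forall x y,
  `|x + y| ^+ 2 = `|x| ^+ 2 + 2 * ip x y + `|y| ^+ 2.
Proof.
move=> h x y; rewrite -!(ipxx h) !(ipDl h) !(ipDr h) (ipC h y x); ring.
Qed.

Lemma ip_sqrB {R : realType} {V : completeNormedModType R} {ip : V -> V -> R} :
  is_inner_product ip -> forall x y,
  `|x - y| ^+ 2 = `|x| ^+ 2 - 2 * ip x y + `|y| ^+ 2.
Proof.
move=> h x y; rewrite -!(ipxx h) !(ipBl h) !(ipBr h) (ipC h y x); ring.
Qed.

Lemma CS2 {R : realType} {V : completeNormedModType R} {ip : V -> V -> R} :
  is_inner_product ip -> forall x y, ip x y ^+ 2 <= `|x| ^+ 2 * `|y| ^+ 2.
Proof.
move=> h x y.
have [y0|ny0] := eqVneq y 0.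
  by rewrite y0 (ip0r h) normr0 expr0n /= mulr0.
have ypos : 0 < `|y| ^+ 2 by rewrite exprn_gt0 // normr_gt0.
pose t := ip x y / `|y| ^+ 2.
have := normr_ge0 (x - t *: y); move/(exprn_ge0 2).
rewrite (ip_sqrB h) (ipZr h) normrZ exprMn real_normK ?num_real //.
move=> H.
have E : forall a b c : R, b != 0 ->
  b * (c - 2 * (a / b * a) + (a / b) ^+ 2 * b) = b * c - a ^+ 2.
  by move=> a b c bn0; field.
have := mulr_ge0 (ltW ypos) H; rewrite /t E ?gt_eqF // subr_ge0 mulrC; done.
Qed.

Lemma CS {R : realType} {V : completeNormedModType R} {ip : V -> V -> R} :
  is_inner_product ip -> forall x y, `|ip x y| <= `|x| * `|y|.
Proof.
move=> h x y; rewrite -(@ler_pXn2r _ 2) ?nnegrE ?mulr_ge0 //.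
by rewrite exprMn real_normK ?num_real // (CS2 h).
Qed.
Lemma Wspan0 {R : realType} {V : completeNormedModType R} (omega : nat -> V) k :
  Wspan omega k 0.
Proof. by exists (fun _ => 0); rewrite big1 // => j _; rewrite scale0r. Qed.

Lemma Wspan_lin {R : realType} {V : completeNormedModType R} {omega : nat -> V} {k : nat}
  (a : R) {x y : V} : Wspan omega k x -> Wspan omega k y -> Wspan omega k (a *: x + y).
Proof.
move=> [c ->] [d ->]; exists (fun j => a * c j + d j).
rewrite scaler_sumr -big_split /=; apply: eq_bigr => j _.
by rewrite scalerDl scalerA.
Qed.

Lemma Wspan_B {R : realType} {V : completeNormedModType R} {omega : nat -> V} {k : nat}
  {x y : V} : Wspan omega k x -> Wspan omega k y -> Wspan omega k (x - y).
Proof.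
move=> hx hy; have := Wspan_lin (-1) hy hx.
by rewrite scaleN1r addrC.
Qed.

Lemma Wspan_D {R : realType} {V : completeNormedModType R} {omega : nat -> V} {k : nat}
  {x y : V} : Wspan omega k x -> Wspan omega k y -> Wspan omega k (x + y).
Proof. by move=> hx hy; have := Wspan_lin 1 hx hy; rewrite scale1r. Qed.

Lemma Wspan_Z {R : realType} {V : completeNormedModType R} {omega : nat -> V} {k : nat}
  (a : R) {x : V} : Wspan omega k x -> Wspan omega k (a *: x).
Proof. by move=> hx; have := Wspan_lin a hx (@Wspan0 _ _ omega k); rewrite addr0. Qed.

Lemma Wspan_S {R : realType} {V : completeNormedModType R} {omega : nat -> V} {k : nat}
  {x : V} : Wspan omega k x -> Wspan omega k.+1 x.
Proof.
move=> [c ->]; exists (fun j : 'I_k.+1 => if unlift ord_max j is Some j' then c j' else 0).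
rewrite big_ord_recr /= unlift_none scale0r addr0; apply: eq_bigr => j _.
have -> : widen_ord (leqnSn k) j = lift ord_max j by apply: val_inj; rewrite /= /bump leqNgt ltn_ord.
by rewrite liftK.
Qed.

Lemma Wspan_last {R : realType} {V : completeNormedModType R} (omega : nat -> V) k :
  Wspan omega k.+1 (omega k).
Proof.
exists (fun j : 'I_k.+1 => if j == ord_max then 1 else 0).
rewrite big_ord_recr /= eqxx scale1r big1 ?add0r // => j _.
by rewrite -val_eqE /= ltn_eqF ?ltn_ord // scale0r.
Qed.

Lemma Wspan_dec {R : realType} {V : completeNormedModType R} {omega : nat -> V} {k : nat}
  {v : V} : Wspan omega k.+1 v -> exists w (c : R), Wspan omega k w /\ v = w + c *: omega k.
Proof.
move=> [c ->]; rewrite big_ord_recr /=.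
by exists (\sum_(i < k) c (widen_ord (leqnSn k) i) *: omega i), (c ord_max); split => //;
  exists (fun i => c (widen_ord (leqnSn k) i)).
Qed.

Lemma Wspan_0 {R : realType} {V : completeNormedModType R} (omega : nat -> V) v :
  Wspan omega 0 v -> v = 0.
Proof. by move=> [c ->]; rewrite big_ord0. Qed.

Lemma proj_spec {R : realType} {V : completeNormedModType R} {ip : V -> V -> R}
  (W : set V) x : (exists p, is_proj ip W x p) -> is_proj ip W x (Defs.proj ip W x).
Proof. by move=> ex; rewrite /Defs.proj; apply: xgetPex. Qed.

Lemma proj_ex {R : realType} {V : completeNormedModType R} {ip : V -> V -> R} :
  is_inner_product ip -> forall (omega : nat -> V) k x,
  exists p, is_proj ip (Wspan omega k) x p.
Proof.
move=> h omega; elim=> [|k IH] x.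
  exists 0; split; first exact: Wspan0.
  by move=> w /Wspan_0 ->; rewrite (ip0r h).
pose P y := Defs.proj ip (Wspan omega k) y.
have HP y : is_proj ip (Wspan omega k) y (P y) by apply: proj_spec.
pose u := omega k - P (omega k).
have Wu : Wspan omega k.+1 u.
  by apply: Wspan_B; [apply: Wspan_last | apply: Wspan_S; case: (HP (omega k))].
have uorth w : Wspan omega k w -> ip u w = 0 by case: (HP (omega k)) => _; apply.
have dec w : Wspan omega k.+1 w ->
    exists w'' (c : R), Wspan omega k w'' /\ w = w'' + c *: u.
  move=> /Wspan_dec [w' [c [Ww' ->]]].
  exists (w' + c *: P (omega k)), c; split.
    by apply: Wspan_D => //; apply: Wspan_Z; case: (HP (omega k)).
  by rewrite /u scalerBr (addrC (c *: omega k)) addrA addrK.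
have [u0|un0] := eqVneq u 0.
  exists (P x); split; first by apply: Wspan_S; case: (HP x).
  move=> w /dec [w'' [c [Ww ->]]].
  by rewrite (ipDr h) (ipZr h) u0 (ip0r h) mulr0 addr0; case: (HP x) => _; apply.
pose t := ip (x - P x) u / `|u| ^+ 2.
exists (P x + t *: u); split.
  by apply: Wspan_D; [apply: Wspan_S; case: (HP x) | apply: Wspan_Z].
have rorth w : Wspan omega k w -> ip (x - P x) w = 0 by case: (HP x) => _; apply.
have ->: x - (P x + t *: u) = (x - P x) - t *: u by rewrite opprD addrA.
move=> w /dec [w'' [c [Ww ->]]].
rewrite (ipDr h) (ipZr h) !(ipBl h (x - P x) (t *: u)) !(ipZl h) (rorth _ Ww) (uorth _ Ww).
rewrite (ipxx h) /t mulr0 subr0 add0r.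
have nu : `|u| ^+ 2 != 0 by rewrite expf_neq0 // normr_eq0.
by rewrite divfK // subrr mulr0.
Qed.

Lemma projP {R : realType} {V : completeNormedModType R} {ip : V -> V -> R} :
  is_inner_product ip -> forall (omega : nat -> V) k x,
  is_proj ip (Wspan omega k) x (Defs.proj ip (Wspan omega k) x).
Proof. by move=> h omega k x; apply: proj_spec; apply: proj_ex. Qed.

Lemma proj_min {R : realType} {V : completeNormedModType R} {ip : V -> V -> R} :
  is_inner_product ip -> forall (omega : nat -> V) k x q, Wspan omega k q ->
  `|x - Defs.proj ip (Wspan omega k) x| ^+ 2 <= `|x - q| ^+ 2.
Proof.
move=> h omega k x q Wq.
have [Wp orth] := projP h omega k x.
set p := Defs.proj ip _ x in Wp orth *.
have -> : x - q = (x - p) + (p - q) by rewrite addrA subrK.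
rewrite (ip_sqr h (x - p) (p - q)) orth ?mulr0 ?addr0; last exact: Wspan_B.
by rewrite lerDl exprn_ge0.
Qed.

Lemma res_ip {R : realType} {V : completeNormedModType R} {ip : V -> V -> R} :
  is_inner_product ip -> forall (omega : nat -> V) k x,
  `|x - Defs.proj ip (Wspan omega k) x| ^+ 2 =
    ip (x - Defs.proj ip (Wspan omega k) x) x.
Proof.
move=> h omega k x.
have [Wp orth] := projP h omega k x.
set p := Defs.proj ip _ x in Wp orth *.
by rewrite -(ipxx h) (ipBr h (x - p) x p) (orth _ Wp) subr0.
Qed.

Lemma crit_le_res {R : realType} {V : completeNormedModType R} {ip : V -> V -> R} :
  is_inner_product ip -> forall (omega : nat -> V) n (phi : 'I_n -> V) k w,
  `|w| = 1 -> greedy_crit ip phi (Wspan omega k) w <= residual ip phi omega k.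
Proof.
move=> h omega n phi k w w1; apply: ler_sum => i _.
rewrite real_normK ?num_real //; have := CS2 h (phi i - Defs.proj ip (Wspan omega k) (phi i)) w.
by rewrite w1 expr1n mulr1.
Qed.

Lemma stepB {R : realType} {V : completeNormedModType R} {ip : V -> V -> R} :
  is_inner_product ip -> forall (omega : nat -> V) n (phi : 'I_n -> V) k,
  `|omega k| = 1 ->
  residual ip phi omega k.+1 <=
    residual ip phi omega k - greedy_crit ip phi (Wspan omega k) (omega k).
Proof.
move=> h omega n phi k w1; rewrite /residual /greedy_crit -sumrB; apply: ler_sum => i _.
set x := phi i; set p := Defs.proj ip (Wspan omega k) x.
set t := ip (x - p) (omega k).
have Wq : Wspan omega k.+1 (p + t *: omega k).
  apply: Wspan_D; last exact/Wspan_Z/Wspan_last.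
  by apply: Wspan_S; case: (projP h omega k x).
apply: le_trans; first exact: (proj_min h omega k.+1 x _ Wq).
rewrite opprD addrA (ip_sqrB h) (ipZr h) normrZ w1 mulr1 real_normK ?num_real //.
by rewrite -/t le_eqVlt; apply/orP; left; apply/eqP; ring.
Qed.
Lemma sum_CS {R : realType} n (a b : 'I_n -> R) :
  \sum_(i < n) a i * b i <=
    Num.sqrt (\sum_(i < n) a i ^+ 2) * Num.sqrt (\sum_(i < n) b i ^+ 2).
Proof.
set A := \sum_(i < n) a i ^+ 2; set B := \sum_(i < n) b i ^+ 2.
set S := \sum_(i < n) a i * b i.
have A0 : 0 <= A by apply: sumr_ge0 => i _; apply: sqr_ge0.
have B0 : 0 <= B by apply: sumr_ge0 => i _; apply: sqr_ge0.
have E t : \sum_(i < n) (t * a i - b i) ^+ 2 = t ^+ 2 * A - 2 * t * S + B.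
  rewrite /A /B /S !mulr_sumr -sumrB -big_split /=; apply: eq_bigr => i _; ring.
have S2 : S ^+ 2 <= A * B.
  have [A00|Apos] := eqVneq A 0.
    have a0 i : a i = 0.
      apply/eqP; rewrite -sqrf_eq0; apply/eqP.
      by move/eqP: A00; rewrite psumr_eq0 => [/allP /(_ i (mem_index_enum _)) /eqP|j _];
        [|apply: sqr_ge0].
    have -> : S = 0 by rewrite /S big1 // => i _; rewrite a0 mul0r.
    by rewrite expr0n /= mulr_ge0.
  have Ap : 0 < A by rewrite lt_def Apos A0.
  have : 0 <= \sum_(i < n) (S / A * a i - b i) ^+ 2 by apply: sumr_ge0 => i _; apply: sqr_ge0.
  rewrite E => H.
  have E2 : (S / A) ^+ 2 * A - 2 * (S / A) * S + B = B - S ^+ 2 / A by field.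
  rewrite E2 subr_ge0 ler_pdivrMr // in H.
  by rewrite mulrC.
rewrite -sqrtrM //; apply: le_trans (ler_wsqrtr S2).
by rewrite sqrtr_sqr ler_norm.
Qed.

Lemma ip_cvg {R : realType} {V : completeNormedModType R} {ip : V -> V -> R} :
  is_inner_product ip -> forall z (f : nat -> V) y,
  f n @[n --> \oo] --> y -> ip z (f n) @[n --> \oo] --> ip z y.
Proof.
move=> h z f y /cvgrPdist_le fy; apply/cvgrPdist_le => e e0.
have ep : 0 < e / (`|z| + 1) by rewrite divr_gt0 // ltr_wpDl.
apply: filterS (fy _ ep) => N HN.
rewrite -(ipBr h); apply: le_trans (CS h _ _) _.
apply: le_trans (ler_wpM2l (normr_ge0 z) HN) _.
rewrite mulrCA ger_pMr // ler_pdivrMr ?ltr_wpDl // mul1r lerDl //.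
Qed.

Lemma ip_sumr_seq {R : realType} {V : completeNormedModType R} {ip : V -> V -> R} :
  is_inner_product ip -> forall x (I : Type) (s : seq I) (c : I -> R) (w : I -> V),
  ip x (\sum_(j <- s) c j *: w j) = \sum_(j <- s) c j * ip x (w j).
Proof.
move=> h x I s c w; elim/big_rec2: _ => [|j a y _ <-]; first exact: ip0r.
by rewrite (ipDr h) (ipZr h).
Qed.

Lemma partial_bound {R : realType} {V : completeNormedModType R} {ip : V -> V -> R} :
  is_inner_product ip -> forall (D : set V) (omega : nat -> V) n (phi : 'I_n -> V) k
  (c : nat -> 'I_n -> R) (w : nat -> V) N,
  (forall v, D v -> `|v| = 1) -> (forall j, D (w j)) ->
  \sum_(i < n) ip (phi i - Defs.proj ip (Wspan omega k) (phi i))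
                  (\sum_(0 <= j < N) c j i *: w j)
  <= Num.sqrt (sup [set greedy_crit ip phi (Wspan omega k) v | v in D]) *
     \sum_(0 <= j < N) norm2 (c j).
Proof.
move=> h D omega n phi k c w N Dunit Dw.
set S := sup _.
have hub : has_ubound [set greedy_crit ip phi (Wspan omega k) v | v in D].
  exists (residual ip phi omega k) => _ [v Dv <-].
  by apply: crit_le_res => //; apply: Dunit.
under eq_bigr do rewrite (ip_sumr_seq h).
rewrite exchange_big /= mulr_sumr; apply: ler_sum => j _.
have H := sum_CS n (fun i => c j i) (fun i => ip (phi i - Defs.proj ip (Wspan omega k) (phi i)) (w j)); simpl in H. apply: le_trans H _.
rewrite /norm2.
rewrite [X in _ <= X]mulrC; apply: ler_wpM2l; first exact: sqrtr_ge0.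
apply: ler_wsqrtr.
apply: (@le_trans _ _ (greedy_crit ip phi (Wspan omega k) (w j))).
  by rewrite le_eqVlt; apply/orP; left; apply/eqP; rewrite /greedy_crit; apply: eq_bigr => i _; rewrite real_normK ?num_real.
by apply: ub_le_sup hub _ _; exists (w j).
Qed.

Lemma partial_cvg {R : realType} {V : completeNormedModType R} {ip : V -> V -> R} :
  is_inner_product ip -> forall (omega : nat -> V) n (phi : 'I_n -> V) k
  (c : nat -> 'I_n -> R) (w : nat -> V),
  (forall i : 'I_n, (\sum_(0 <= j < N) c j i *: w j) @[N --> \oo] --> phi i) ->
  (\sum_(i < n) ip (phi i - Defs.proj ip (Wspan omega k) (phi i))
                  (\sum_(0 <= j < N) c j i *: w j)) @[N --> \oo]
  --> residual ip phi omega k.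
Proof.
move=> h omega n phi k c w cv.
have -> : residual ip phi omega k =
    \sum_(i < n) ip (phi i - Defs.proj ip (Wspan omega k) (phi i)) (phi i).
  by apply: eq_bigr => i _; rewrite (res_ip h).
apply: (@cvg_big _ _ +%R 0 xpredT add_continuous) => i _.
exact: ip_cvg.
Qed.

Lemma keyA {R : realType} {V : completeNormedModType R} {ip : V -> V -> R} :
  is_inner_product ip -> forall (D : set V) (omega : nat -> V) n (phi : 'I_n -> V) k,
  (forall v, D v -> `|v| = 1) -> D (omega k) ->
  (l1D_norm D phi < +oo)%E ->
  residual ip phi omega k ^+ 2 <=
    fine (l1D_norm D phi) ^+ 2 *
    sup [set greedy_crit ip phi (Wspan omega k) v | v in D].
Proof.
move=> h D omega n phi k Dunit Dk HJ.
set S := sup _.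
have hub : has_ubound [set greedy_crit ip phi (Wspan omega k) v | v in D].
  exists (residual ip phi omega k) => _ [v Dv <-].
  by apply: crit_le_res => //; apply: Dunit.
have S0 : 0 <= S.
  apply: (@le_trans _ _ (greedy_crit ip phi (Wspan omega k) (omega k))).
    by apply: sumr_ge0 => i _; apply: sqr_ge0.
  by apply: ub_le_sup hub _ _; exists (omega k).
have R0 : 0 <= residual ip phi omega k.
  by apply: sumr_ge0 => i _; apply: sqr_ge0.
have bnd : forall (c : nat -> 'I_n -> R) (w : nat -> V),
    (forall j, D (w j)) ->
    (forall i : 'I_n, (\sum_(0 <= j < N) c j i *: w j) @[N --> \oo] --> phi i) ->
    forall b, (forall N, \sum_(0 <= j < N) norm2 (c j) <= b) ->
    residual ip phi omega k <= Num.sqrt S * b.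
  move=> c w Dw cv b hb.
  apply: (cvgr_to_le (partial_cvg h omega n phi k c w cv)); apply: nearW => N.
  apply: le_trans (partial_bound h D omega n phi k c w N Dunit Dw) _.
  by apply: ler_wpM2l; [apply: sqrtr_ge0 | apply: hb].
have n2 : forall c : 'I_n -> R, 0 <= norm2 c by move=> c; apply: sqrtr_ge0.
have repb : forall e, [set (\sum_(0 <= j <oo) (norm2 (c j))%:E)%E
            | c in [set c : nat -> 'I_n -> R | exists w : nat -> V,
                 (forall j, D (w j)) /\
                 forall i, (fun N => \sum_(0 <= j < N) c j i *: w j) @ \oo --> phi i]] e ->
    (e < +oo)%E -> residual ip phi omega k <= Num.sqrt S * fine e /\ e = (fine e)%:E.
  move=> _ [c [w [Dw cv]] <-] elt.
  have ge0 : (0 <= \sum_(0 <= j <oo) (norm2 (c j))%:E)%E.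
    by have := @nneseries_lim_ge R (fun j => (norm2 (c j))%:E) xpredT 0 0 (fun j _ _ => (n2 (c j) : (0 <= (norm2 (c j))%:E)%E)); rewrite big_geq.
  have fin : (\sum_(0 <= j <oo) (norm2 (c j))%:E)%E \is a fin_num by rewrite ge0_fin_numE.
  split; last by rewrite fineK.
  apply: (bnd c w Dw cv) => N.
  rewrite -lee_fin fineK // -sumEFin.
  exact: (@nneseries_lim_ge R (fun j => (norm2 (c j))%:E) xpredT 0 N (fun j _ _ => (n2 (c j) : (0 <= (norm2 (c j))%:E)%E))).
have [Sp|Sle] := ltP 0 (Num.sqrt S); last first.
  have sq0 : Num.sqrt S = 0 by apply/eqP; rewrite eq_le Sle sqrtr_ge0.
  have [e He elt] := ereal_inf_lt HJ.
  have [+ _] := repb e He elt; rewrite sq0 mul0r => Rle.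
  have -> : residual ip phi omega k = 0 by apply/eqP; rewrite eq_le Rle R0.
  by rewrite expr0n /= mulr_ge0 // sqr_ge0.
have lb : ((residual ip phi omega k / Num.sqrt S)%:E <= l1D_norm D phi)%E.
  apply: le_ereal_inf_tmp => e He.
  have [elt|] := ltP e +oo%E; last by rewrite leye_eq => /eqP ->; apply: leey.
  have [Rle ->] := repb e He elt.
  by rewrite lee_fin ler_pdivrMr // mulrC.
have finJ : l1D_norm D phi \is a fin_num.
  rewrite fin_numElt HJ andbT; apply: lt_le_trans lb; exact: ltNyr.
move: lb; rewrite -(fineK finJ) lee_fin ler_pdivrMr // mulrC => lb.
have : residual ip phi omega k ^+ 2 <= (Num.sqrt S * fine (l1D_norm D phi)) ^+ 2.
  by rewrite ler_pXn2r // nnegrE // (le_trans R0 lb).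
by rewrite exprMn sqr_sqrtr // mulrC.
Qed.
Lemma recur_step {R : realType} {A K x y F : R} : 0 <= A -> 0 < K -> 0 <= x -> 0 <= F ->
  K * x <= A -> x ^+ 2 <= A * F -> y <= x - F -> (K + 1) * y <= A.
Proof.
move=> A0 K0 x0 F0 h1 h2 h3.
have [c1|c2] := leP ((K + 1) * x) A.
  nra.
have xp : 0 < x by nra.
have h4 : x ^+ 2 <= (K + 1) * x * F by nra.
have h5 : x <= (K + 1) * F.
  by rewrite -(ler_pM2l xp); nra.
nra.
Qed.

Lemma recur {R : realType} (A : R) (a f : nat -> R) : 0 <= A ->
  (forall k, 0 <= a k) -> (forall k, 0 <= f k) -> (forall k, f k <= a k) ->
  (forall k, a k ^+ 2 <= A * f k) -> (forall k, a k.+1 <= a k - f k) ->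
  forall m, a m <= A * (m.+1%:R)^-1.
Proof.
move=> A0 a0 f0 fa af ak m.
rewrite mulrC ler_pdivlMl ?ltr0Sn //.
elim: m => [|m IH].
  rewrite mul1r; have := af 0%N; have := fa 0%N; have := a0 0%N; have := f0 0%N; nra.
rewrite -natr1.
exact: (recur_step A0 (ltr0Sn _ m) (a0 m) (f0 m) IH (af m) (ak m)).
Qed.

Theorem theorem1 (R : realType) (V : completeNormedModType R) (ip : V -> V -> R)
  (D : set V) (n : nat) (phi : 'I_n -> V) (kappa : R) (omega : nat -> V) :
  is_inner_product ip ->
  is_dictionary D ->
  (forall i j : 'I_n, ip (phi i) (phi j) = (i == j)%:R) ->
  0 < kappa < 1 ->
  collective_OMP ip D phi kappa omega ->
  (l1D_norm D phi < +oo)%E ->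
  forall m : nat,
    residual ip phi omega m <=
      (fine (l1D_norm D phi)) ^+ 2 / kappa ^+ 2 * (m.+1%:R)^-1.
Proof.
move=> h [Dunit _] _ /andP [k0 _] omp HJ m.
have k2 : 0 < kappa ^+ 2 by rewrite exprn_gt0.
apply: (@recur R _ (fun k => residual ip phi omega k) (fun k => greedy_crit ip phi (Wspan omega k) (omega k))).
- by rewrite divr_ge0 // ?sqr_ge0 // ltW.
- by move=> k; apply: sumr_ge0 => i _; apply: sqr_ge0.
- by move=> k; apply: sumr_ge0 => i _; apply: sqr_ge0.
- by move=> k; apply: crit_le_res => //; apply: Dunit; case: (omp k).
- move=> k; have [Dk hk] := omp k.
  apply: le_trans (keyA h D omega n phi k Dunit Dk HJ) _.
  rewrite -mulrA; apply: ler_wpM2l; first exact: sqr_ge0.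
  by rewrite ler_pdivlMl.
- by move=> k; apply: stepB => //; apply: Dunit; case: (omp k).
Qed.
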